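(* Let $\mathcal{H}$ be a right quaternionic Hilbert space and $x_1,\dots,x_n,y_1,\dots,y_n\in\mathcal{H}$ unit vectors. Let $g(z)=\sum_{i=0}^\infty a_iz^{2i}$ be analytic in the open complex unit disk with $a_i\in\mathbb{R}$ and $\sum_{i=0}^\infty|a_i|=1$. Then there exist unit vectors $u_1,\dots,u_n,v_1,\dots,v_n$ in a right quaternionic Hilbert space $\mathcal{H}'$ such that $\langle x_i,y_j\rangle\,g(|\langle x_i,y_j\rangle|)=\langle u_i,v_j\rangle$ for all $i,j=1,\dots,n$.
   Context: A right quaternionic Hilbert space is a right $\mathbb{H}$-vector space with inner product satisfying $\langle y,x\rangle=\overline{\langle x,y\rangle}$, $\langle xa+yb,z\rangle=\bar a\langle x,z\rangle+\bar b\langle y,z\rangle$, $\langle z,xa+yb\rangle=\langle z,x\rangle a+\langle z,y\rangle b$, $\langle x,x\rangle>0$ for $x\ne0$. *)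

(* Defs.v *)
From Stdlib Require Import Reals Lra.
From Coquelicot Require Import Coquelicot.
Open Scope R_scope.

Record quat := Quat { q0 : R; q1 : R; q2 : R; q3 : R }.

Definition qreal (r : R) : quat := Quat r 0 0 0.
Definition qzero : quat := qreal 0.
Definition qone : quat := qreal 1.
Definition qadd (p q : quat) : quat :=
  Quat (q0 p + q0 q) (q1 p + q1 q) (q2 p + q2 q) (q3 p + q3 q).
(* Hamilton product: (a0 + a1 i + a2 j + a3 k)(b0 + b1 i + b2 j + b3 k) *)
Definition qmul (p q : quat) : quat :=
  Quat (q0 p * q0 q - q1 p * q1 q - q2 p * q2 q - q3 p * q3 q)
       (q0 p * q1 q + q1 p * q0 q + q2 p * q3 q - q3 p * q2 q)
       (q0 p * q2 q - q1 p * q3 q + q2 p * q0 q + q3 p * q1 q)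
       (q0 p * q3 q + q1 p * q2 q - q2 p * q1 q + q3 p * q0 q).
Definition qconj (p : quat) : quat := Quat (q0 p) (- q1 p) (- q2 p) (- q3 p).
Definition qabs (p : quat) : R :=
  sqrt (q0 p ^ 2 + q1 p ^ 2 + q2 p ^ 2 + q3 p ^ 2).

(* A right H-vector space with an H-valued inner product satisfying the
   axioms of the paper, complete for the induced norm. Scalar action is on
   the right: [scale x a] is "x a". *)
Record RQHilbert := {
  carrier :> Type;
  vzero : carrier;
  vadd : carrier -> carrier -> carrier;
  vopp : carrier -> carrier;
  scale : carrier -> quat -> carrier;
  ip : carrier -> carrier -> quat;
  vaddA : forall x y z, vadd x (vadd y z) = vadd (vadd x y) z;
  vaddC : forall x y, vadd x y = vadd y x;
  vadd0 : forall x, vadd x vzero = x;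
  vaddN : forall x, vadd x (vopp x) = vzero;
  scale1 : forall x, scale x qone = x;
  scaleA : forall x a b, scale x (qmul a b) = scale (scale x a) b;
  scaleDv : forall x y a, scale (vadd x y) a = vadd (scale x a) (scale y a);
  scaleDs : forall x a b, scale x (qadd a b) = vadd (scale x a) (scale x b);
  ip_sym : forall x y, ip y x = qconj (ip x y);
  ip_linl : forall x y z a b,
      ip (vadd (scale x a) (scale y b)) z
      = qadd (qmul (qconj a) (ip x z)) (qmul (qconj b) (ip y z));
  ip_linr : forall x y z a b,
      ip z (vadd (scale x a) (scale y b))
      = qadd (qmul (ip z x) a) (qmul (ip z y) b);
  ip_pos : forall x, x <> vzero -> exists r, 0 < r /\ ip x x = qreal r;
  complete : forall u : nat -> carrier,
      (forall eps, 0 < eps -> exists N, forall m n, (N <= m)%nat -> (N <= n)%nat ->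
          sqrt (q0 (ip (vadd (u m) (vopp (u n))) (vadd (u m) (vopp (u n))))) < eps) ->
      exists l, forall eps, 0 < eps -> exists N, forall n, (N <= n)%nat ->
          sqrt (q0 (ip (vadd (u n) (vopp l)) (vadd (u n) (vopp l)))) < eps
}.

Definition vnorm (H : RQHilbert) (x : H) : R := sqrt (q0 (ip H x x)).
Definition unit_vec (H : RQHilbert) (x : H) : Prop := vnorm H x = 1.

Definition gfun (a : nat -> R) (t : R) : R := Series (fun i => a i * t ^ (2 * i)).

(* Main.v *)
Require Import Defs.
From Stdlib Require Import Reals Lra Lia Classical.
From Coquelicot Require Import Coquelicot.
Open Scope R_scope.

Fixpoint fsum (n : nat) (f : nat -> R) : R :=
  match n with O => 0 | S n' => fsum n' f + f n' end.

Lemma fsum_ext n f g : (forall i, (i < n)%nat -> f i = g i) -> fsum n f = fsum n g.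
Proof. induction n; simpl; intros H; auto. rewrite IHn by (intros; apply H; lia). rewrite H by lia. auto. Qed.

Lemma fsum_plus n f g : fsum n (fun i => f i + g i) = fsum n f + fsum n g.
Proof. induction n; simpl; [ring|rewrite IHn; ring]. Qed.

Lemma fsum_scal n c f : fsum n (fun i => c * f i) = c * fsum n f.
Proof. induction n; simpl; [ring|rewrite IHn; ring]. Qed.

Lemma fsum_0 n : fsum n (fun _ => 0) = 0.
Proof. induction n; simpl; [ring|rewrite IHn; ring]. Qed.

Lemma fsum_shift n f : fsum (S n) f = f O + fsum n (fun i => f (S i)).
Proof. induction n; simpl in *; [ring|rewrite IHn; ring]. Qed.

Lemma fsum_swap n m f : fsum n (fun a => fsum m (fun b => f a b)) = fsum m (fun b => fsum n (fun a => f a b)).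
Proof. induction n; simpl. now rewrite fsum_0. rewrite IHn, <- fsum_plus. auto. Qed.

Lemma fsum_nonneg n f : (forall i, (i < n)%nat -> 0 <= f i) -> 0 <= fsum n f.
Proof. induction n; simpl; intros H. lra. assert (0 <= f n) by (apply H; lia). assert (0 <= fsum n f) by (apply IHn; intros; apply H; lia). lra. Qed.

Lemma fsum_add m k f : fsum (m + k) f = fsum m f + fsum k (fun i => f (m + i)%nat).
Proof. induction k; simpl. rewrite Nat.add_0_r; ring. rewrite Nat.add_succ_r; simpl; rewrite IHk; ring. Qed.

Lemma fsum_ind n c f : (c < n)%nat -> fsum n (fun i => (if Nat.eqb i c then 1 else 0) * f i) = f c.
Proof. induction n; intros Hc. lia. simpl. destruct (Nat.eq_dec c n).
 - subst. rewrite Nat.eqb_refl. rewrite (fsum_ext _ _ (fun _ => 0)). rewrite fsum_0; ring.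
   intros i Hi. destruct (Nat.eqb_spec i n). lia. ring.
 - rewrite IHn by lia. destruct (Nat.eqb_spec n c). lia. ring. Qed.

Definition quad n (Z : nat -> nat -> R) (x : nat -> R) :=
  fsum n (fun a => fsum n (fun b => x a * x b * Z a b)).

Definition PSD n (Z : nat -> nat -> R) :=
  (forall a b, Z a b = Z b a) /\ forall x, 0 <= quad n Z x.

Lemma quad_shift n Z x : (forall a b, Z a b = Z b a) -> quad (S n) Z x =
  x O * x O * Z O O + 2 * x O * fsum n (fun b => x (S b) * Z O (S b))
  + quad n (fun a b => Z (S a) (S b)) (fun a => x (S a)).
Proof.
  intros Hs. unfold quad. rewrite fsum_shift. rewrite fsum_shift.
  rewrite (fsum_ext n (fun i => fsum (S n) (fun b => x (S i) * x b * Z (S i) b))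
     (fun i => x (S i) * x O * Z (S i) O + fsum n (fun b => x (S i) * x (S b) * Z (S i) (S b)))).
  2:{ intros; now rewrite fsum_shift. }
  rewrite fsum_plus.
  rewrite (fsum_ext n (fun i => x (S i) * x O * Z (S i) O) (fun b => x O * (x (S b) * Z O (S b)))).
  2:{ intros; rewrite (Hs (S i)); ring. }
  rewrite (fsum_ext n (fun b => x O * x (S b) * Z O (S b)) (fun b => x O * (x (S b) * Z O (S b)))).
  2:{ intros; ring. }
  rewrite !fsum_scal. ring.
Qed.

Definition indv (c : nat) : nat -> R := fun i => if Nat.eqb i c then 1 else 0.

Lemma quad_ind n Z c : (c < n)%nat -> quad n Z (indv c) = Z c c.
Proof.
  intros Hc. unfold quad, indv.
  rewrite (fsum_ext n _ (fun a => (if Nat.eqb a c then 1 else 0) *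
     fsum n (fun b => (if Nat.eqb b c then 1 else 0) * Z a b))).
  2:{ intros. rewrite <- fsum_scal. apply fsum_ext; intros; ring. }
  rewrite fsum_ind by auto. now rewrite fsum_ind.
Qed.

Lemma quad_zero n Z : quad n Z (fun _ => 0) = 0.
Proof. unfold quad. rewrite (fsum_ext n _ (fun _ => 0)). apply fsum_0.
  intros. rewrite (fsum_ext n _ (fun _ => 0)). apply fsum_0. intros; ring. Qed.

Lemma quad_rank1 n Z c d x : quad n (fun a b => Z a b - c a * c b / d) x =
  quad n Z x - (fsum n (fun a => x a * c a)) ^ 2 / d.
Proof.
  unfold quad.
  rewrite (fsum_ext n _ (fun a => fsum n (fun b => x a * x b * Z a b) + (- (x a * c a / d)) * fsum n (fun b => x b * c b))).
  2:{ intros. rewrite <- fsum_scal, <- fsum_plus. apply fsum_ext; intros. unfold Rdiv; ring. }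
  rewrite fsum_plus.
  rewrite (fsum_ext n (fun a => - (x a * c a / d) * fsum n (fun b => x b * c b)) (fun a => (- fsum n (fun b => x b * c b) / d) * (x a * c a))).
  2:{ intros. unfold Rdiv. ring. }
  rewrite fsum_scal. unfold Rdiv. ring.
Qed.

Lemma chol n : forall Z, PSD n Z -> exists L : nat -> nat -> R,
  forall a b, (a < n)%nat -> (b < n)%nat -> Z a b = fsum n (fun l => L a l * L b l).
Proof.
  induction n; intros Z [Hs Hp].
  - exists (fun _ _ => 0). intros; lia.
  - set (s := fun x' => fsum n (fun b => x' b * Z O (S b))).
    assert (Hq : forall t x', 0 <= t * t * Z O O + 2 * t * s x' + quad n (fun a b => Z (S a) (S b)) x').
    { intros t x'. specialize (Hp (fun a => match a with O => t | S a' => x' a' end)).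
      rewrite quad_shift in Hp by auto. exact Hp. }
    assert (H00 : 0 <= Z O O).
    { specialize (Hq 1 (fun _ => 0)). unfold s in Hq. rewrite quad_zero in Hq.
      rewrite (fsum_ext n _ (fun _ => 0)) in Hq by (intros; ring). rewrite fsum_0 in Hq. lra. }
    destruct (Rlt_dec 0 (Z O O)) as [Hpos|Hz].
    + set (Zs := fun a b => Z (S a) (S b) - Z O (S a) * Z O (S b) / Z O O).
      destruct (IHn Zs) as [L' HL'].
      { split. { intros a b; unfold Zs; rewrite (Hs (S a) (S b)); unfold Rdiv; ring. }
        intros x'. unfold Zs. rewrite quad_rank1.
        specialize (Hq (- s x' / Z O O) x').
        replace (fsum n (fun a => x' a * Z O (S a))) with (s x') by reflexivity.
        assert (E: - s x' / Z O O * (- s x' / Z O O) * Z O O + 2 * (- s x' / Z O O) * s x' = - (s x' ^2 / Z O O)) by (field; lra).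
        lra. }
      set (r := sqrt (Z O O)).
      assert (Hr : r * r = Z O O) by (apply sqrt_sqrt; lra).
      assert (Hr0 : r <> 0) by (intro E; rewrite E in Hr; lra).
      exists (fun a l => match a, l with O, O => r | O, S _ => 0 | S a', O => Z O (S a') / r | S a', S l' => L' a' l' end).
      intros a b Ha Hb. rewrite fsum_shift.
      destruct a as [|a], b as [|b].
      * rewrite (fsum_ext n _ (fun _ => 0)) by (intros; ring). rewrite fsum_0. lra.
      * rewrite (fsum_ext n _ (fun _ => 0)) by (intros; ring). rewrite fsum_0. field. auto.
      * rewrite (fsum_ext n _ (fun _ => 0)) by (intros; ring). rewrite fsum_0. rewrite Hs. field. auto.
      * rewrite <- HL' by lia. unfold Zs. rewrite <- Hr. field. auto.
    + assert (Z0 : Z O O = 0) by lra.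
      assert (Hrow : forall b, (b < n)%nat -> Z O (S b) = 0).
      { intros b Hb. specialize (Hq (- (Z (S b) (S b) + 1) / (2 * Z O (S b)))). 
        destruct (Req_dec (Z O (S b)) 0) as [E|E]; auto. exfalso.
        specialize (Hq (indv b)). rewrite quad_ind in Hq by auto.
        unfold s in Hq. idtac.
        unfold indv in Hq. rewrite fsum_ind in Hq by auto. rewrite Z0 in Hq.
        assert (E2 : 2 * (- (Z (S b) (S b) + 1) / (2 * Z O (S b))) * Z O (S b) = - (Z (S b) (S b) + 1)) by (field; auto).
        lra. }
      destruct (IHn (fun a b => Z (S a) (S b))) as [L' HL'].
      { split. intros; apply Hs. intros x'. specialize (Hq 0 x'). lra. }
      exists (fun a l => match a, l with O, _ => 0 | S a', O => 0 | S a', S l' => L' a' l' end).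
      intros a b Ha Hb. rewrite fsum_shift.
      destruct a as [|a], b as [|b].
      * rewrite (fsum_ext n _ (fun _ => 0)) by (intros; ring). rewrite fsum_0. lra.
      * rewrite (fsum_ext n _ (fun _ => 0)) by (intros; ring). rewrite fsum_0. rewrite Hrow by lia. ring.
      * rewrite (fsum_ext n _ (fun _ => 0)) by (intros; ring). rewrite fsum_0. rewrite Hs, Hrow by lia. ring.
      * rewrite <- HL' by lia. ring.
Qed.

Lemma schur n Z1 Z2 : PSD n Z1 -> PSD n Z2 -> PSD n (fun a b => Z1 a b * Z2 a b).
Proof.
  intros H1 [Hs2 Hp2]. destruct (chol n Z1 H1) as [L HL]. destruct H1 as [Hs1 _].
  split. intros; rewrite Hs1, Hs2; auto.
  intros x.
  assert (E : quad n (fun a b => Z1 a b * Z2 a b) x = fsum n (fun l => quad n Z2 (fun a => x a * L a l))).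
  { unfold quad.
    rewrite (fsum_ext n _ (fun a => fsum n (fun l => fsum n (fun b => x a * L a l * (x b * L b l) * Z2 a b)))).
    apply fsum_swap.
    intros a Ha. rewrite <- fsum_swap. apply fsum_ext. intros b Hb.
    rewrite HL by auto. transitivity ((x a * x b * Z2 a b) * fsum n (fun l => L a l * L b l)). ring.
    rewrite <- fsum_scal. apply fsum_ext; intros; ring. }
  rewrite E. apply fsum_nonneg. intros; apply Hp2.
Qed.

Lemma psd_ones n : PSD n (fun _ _ => 1).
Proof. split. auto. intros x. unfold quad.
  rewrite (fsum_ext n _ (fun a => fsum n x * x a)).
  2:{ intros. rewrite (Rmult_comm (fsum n x)), <- fsum_scal. apply fsum_ext; intros; ring. }
  rewrite fsum_scal. nra. Qed.

Lemma psd_pow n P k : PSD n P -> PSD n (fun a b => P a b ^ k).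
Proof. intros HP. induction k; simpl. apply psd_ones. apply (schur n P _ HP IHk). Qed.

Lemma psd_sign n Z d : PSD n Z -> PSD n (fun a b => d a * d b * Z a b).
Proof. intros [Hs Hp]. split. intros; rewrite Hs; ring. intros x.
  specialize (Hp (fun a => x a * d a)). unfold quad in *.
  erewrite fsum_ext. apply Hp. intros. apply fsum_ext. intros; simpl; ring. Qed.

Lemma psd_scal n Z c : 0 <= c -> PSD n Z -> PSD n (fun a b => c * Z a b).
Proof. intros Hc [Hs Hp]. split. intros; rewrite Hs; ring. intros x.
  specialize (Hp x). unfold quad in *.
  rewrite (fsum_ext n _ (fun a => c * fsum n (fun b => x a * x b * Z a b))).
  rewrite fsum_scal. nra.
  intros. rewrite <- fsum_scal. apply fsum_ext. intros; ring. Qed.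


Lemma is_series_zero : is_series (fun _ => 0) 0.
Proof.
  unfold is_series. apply (filterlim_ext (fun _ => 0)).
  intros n. induction n; simpl. rewrite sum_O. auto. rewrite sum_Sn, <- IHn. unfold plus; simpl. ring.
  apply filterlim_const.
Qed.
Lemma series_nonneg f l : is_series f l -> (forall k, 0 <= f k) -> 0 <= l.
Proof. intros H Hf. rewrite <- (is_series_unique _ _ H).
  rewrite <- (is_series_unique _ _ is_series_zero).
  apply Series_le. intros; split; [lra|auto]. eexists; eauto. Qed.

Lemma is_series_fsum N (f : nat -> nat -> R) s : (forall a, (a < N)%nat -> is_series (f a) (s a)) ->
  is_series (fun k => fsum N (fun a => f a k)) (fsum N s).
Proof. induction N; intros H; simpl.
  - apply is_series_zero.
  - apply (is_series_plus (fun k => fsum N (fun a => f a k)) (f N)). apply IHN; intros; apply H; lia. apply H; lia. Qed.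

Lemma psd_series n (F : nat -> nat -> nat -> R) :
  (forall k, PSD n (F k)) -> (forall a b, (a < n)%nat -> (b < n)%nat -> ex_series (fun k => F k a b)) ->
  PSD n (fun a b => Series (fun k => F k a b)).
Proof.
  intros HF Hex. split.
  - intros. apply Series_ext. intros k. apply (HF k).
  - intros x. unfold quad.
    assert (Hi : is_series (fun k => quad n (F k) x) (fsum n (fun a => fsum n (fun b => x a * x b * Series (fun k => F k a b))))).
    { unfold quad. apply is_series_fsum. intros a Ha. apply is_series_fsum. intros b Hb.
      apply (is_series_scal_l (x a * x b) (fun k => F k a b)). apply Series_correct. auto. }
    apply (series_nonneg _ _ Hi). intros k. apply HF.
Qed.

Ltac qsolve := repeat match goal with q : quat |- _ => destruct q end;
  unfold qzero, qone, qmul, qadd, qconj, qreal; simpl; f_equal; ring.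

Section HL.
Variable H : RQHilbert.

Lemma scale0 (x : H) : scale H x qzero = vzero H.
Proof.
  set (s := scale H x qzero).
  assert (E : vadd H s s = s).
  { unfold s. rewrite <- scaleDs. f_equal. qsolve. }
  rewrite <- (vaddN H s). rewrite <- E at 2. rewrite <- vaddA, vaddN, vadd0. auto.
Qed.

Lemma ip_scalel (x z : H) a : ip H (scale H x a) z = qmul (qconj a) (ip H x z).
Proof.
  pose proof (ip_linl H x x z a qzero) as E. rewrite scale0, vadd0 in E. rewrite E. qsolve.
Qed.

Lemma ip_scaler (x z : H) a : ip H z (scale H x a) = qmul (ip H z x) a.
Proof.
  pose proof (ip_linr H x x z a qzero) as E. rewrite scale0, vadd0 in E. rewrite E. qsolve.
Qed.

Lemma ip_addl (x y z : H) : ip H (vadd H x y) z = qadd (ip H x z) (ip H y z).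
Proof.
  pose proof (ip_linl H x y z qone qone) as E. rewrite !scale1 in E. rewrite E. qsolve.
Qed.

Lemma ip_addr (x y z : H) : ip H z (vadd H x y) = qadd (ip H z x) (ip H z y).
Proof.
  pose proof (ip_linr H x y z qone qone) as E. rewrite !scale1 in E. rewrite E. qsolve.
Qed.

Lemma ip_zerol (z : H) : ip H (vzero H) z = qzero.
Proof. rewrite <- (scale0 z), ip_scalel. qsolve. Qed.

Lemma ip_nonneg (x : H) : exists r, 0 <= r /\ ip H x x = qreal r.
Proof.
  destruct (classic (x = vzero H)) as [E|E].
  - subst. exists 0. split. lra. rewrite ip_zerol. reflexivity.
  - destruct (ip_pos H x E) as [r [Hr Hx]]. exists r. split; auto; lra.
Qed.

Lemma q0_nonneg (x : H) : 0 <= q0 (ip H x x).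
Proof. destruct (ip_nonneg x) as [r [Hr E]]. rewrite E. simpl. auto. Qed.

Lemma unit_ip (x : H) : unit_vec H x -> ip H x x = qone.
Proof.
  unfold unit_vec, vnorm. intros U. destruct (ip_nonneg x) as [r [Hr E]]. rewrite E in *. simpl in U.
  assert (r = 1). { rewrite <- (sqrt_sqrt r) by auto. rewrite U. ring. } subst. reflexivity.
Qed.
End HL.

Definition zeroH : RQHilbert.
Proof.
  refine {| carrier := unit; vzero := tt; vadd := fun _ _ => tt; vopp := fun _ => tt;
            scale := fun _ _ => tt; ip := fun _ _ => qzero |}.
  all: intros; try (repeat match goal with u : unit |- _ => destruct u end; reflexivity).
  - qsolve.
  - qsolve.
  - qsolve.
  - destruct x; congruence.
  - exists tt. intros eps Heps. exists O. intros. unfold qzero, qreal; simpl. rewrite sqrt_0. auto.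
Defined.

Lemma ip_zero_inv (H : RQHilbert) (x : H) : ip H x x = qreal 0 -> x = vzero H.
Proof. intros E. destruct (classic (x = vzero H)) as [|N]; auto.
  destruct (ip_pos H x N) as [r [Hr E2]]. rewrite E in E2. injection E2. lra. Qed.

Lemma sqrt_plus_le a b : 0 <= a -> 0 <= b -> sqrt (a + b) <= sqrt a + sqrt b.
Proof. intros Ha Hb.
  pose proof (sqrt_pos a). pose proof (sqrt_pos b).
  rewrite <- (sqrt_square (sqrt a + sqrt b)) by lra.
  apply sqrt_le_1_alt. pose proof (sqrt_sqrt a Ha) as A. pose proof (sqrt_sqrt b Hb) as B.
  nra. Qed.

Ltac genip := repeat match goal with |- context [ip ?H ?x ?y] => generalize (ip H x y) end; intros.

Definition dsum (H1 H2 : RQHilbert) : RQHilbert.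
Proof.
  refine {| carrier := (carrier H1 * carrier H2)%type; vzero := (vzero H1, vzero H2);
    vadd := fun p q => (vadd H1 (fst p) (fst q), vadd H2 (snd p) (snd q));
    vopp := fun p => (vopp H1 (fst p), vopp H2 (snd p));
    scale := fun p a => (scale H1 (fst p) a, scale H2 (snd p) a);
    ip := fun p q => qadd (ip H1 (fst p) (fst q)) (ip H2 (snd p) (snd q)) |}.
  - intros [] [] []; simpl; f_equal; apply vaddA.
  - intros [] []; simpl; f_equal; apply vaddC.
  - intros []; simpl; f_equal; apply vadd0.
  - intros []; simpl; f_equal; apply vaddN.
  - intros []; simpl; f_equal; apply scale1.
  - intros [] a b; simpl; f_equal; apply scaleA.
  - intros [] [] a; simpl; f_equal; apply scaleDv.
  - intros [] a b; simpl; f_equal; apply scaleDs.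
  - intros [x1 x2] [y1 y2]; simpl. rewrite (ip_sym H1 x1 y1), (ip_sym H2 x2 y2). genip. qsolve.
  - intros [x1 x2] [y1 y2] [z1 z2] a b; simpl. rewrite (ip_linl H1), (ip_linl H2). genip. qsolve.
  - intros [x1 x2] [y1 y2] [z1 z2] a b; simpl. rewrite (ip_linr H1), (ip_linr H2). genip. qsolve.
  - intros [x1 x2] Hne; simpl.
    destruct (ip_nonneg H1 x1) as [r1 [H1r E1]], (ip_nonneg H2 x2) as [r2 [H2r E2]].
    rewrite E1, E2. exists (r1 + r2). split.
    + destruct (Req_dec r1 0) as [Z1|Z1]; [destruct (Req_dec r2 0) as [Z2|Z2]|]; try lra.
      exfalso. apply Hne. subst. f_equal; apply ip_zero_inv; auto.
    + unfold qadd, qreal; simpl. f_equal; ring.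
  - intros u Hc.
    assert (Hn : forall p : carrier H1 * carrier H2, forall q : carrier H1 * carrier H2,
      q0 (qadd (ip H1 (vadd H1 (fst p) (vopp H1 (fst q))) (vadd H1 (fst p) (vopp H1 (fst q))))
               (ip H2 (vadd H2 (snd p) (vopp H2 (snd q))) (vadd H2 (snd p) (vopp H2 (snd q)))))
      = q0 (ip H1 (vadd H1 (fst p) (vopp H1 (fst q))) (vadd H1 (fst p) (vopp H1 (fst q))))
        + q0 (ip H2 (vadd H2 (snd p) (vopp H2 (snd q))) (vadd H2 (snd p) (vopp H2 (snd q))))).
    { intros; reflexivity. }
    destruct (complete H1 (fun n => fst (u n))) as [l1 Hl1].
    { intros eps Heps. destruct (Hc eps Heps) as [N HN]. exists N. intros m k Hm Hk.
      specialize (HN m k Hm Hk). simpl in HN.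
      eapply Rle_lt_trans; [|exact HN]. apply sqrt_le_1_alt.
      pose proof (q0_nonneg H2 (vadd H2 (snd (u m)) (vopp H2 (snd (u k))))). lra. }
    destruct (complete H2 (fun n => snd (u n))) as [l2 Hl2].
    { intros eps Heps. destruct (Hc eps Heps) as [N HN]. exists N. intros m k Hm Hk.
      specialize (HN m k Hm Hk). simpl in HN.
      eapply Rle_lt_trans; [|exact HN]. apply sqrt_le_1_alt.
      pose proof (q0_nonneg H1 (vadd H1 (fst (u m)) (vopp H1 (fst (u k))))). lra. }
    exists (l1, l2). intros eps Heps.
    destruct (Hl1 (eps/2)) as [N1 HN1]; [lra|]. destruct (Hl2 (eps/2)) as [N2 HN2]; [lra|].
    exists (Nat.max N1 N2). intros k Hk. simpl.
    specialize (HN1 k ltac:(lia)). specialize (HN2 k ltac:(lia)). simpl in HN1, HN2.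
    eapply Rle_lt_trans. apply sqrt_plus_le; apply q0_nonneg. lra.
Defined.

Fixpoint hpow (H : RQHilbert) (N : nat) : RQHilbert :=
  match N with O => zeroH | S N => dsum H (hpow H N) end.

Fixpoint mkvec (H : RQHilbert) (N : nat) (f : nat -> carrier H) : carrier (hpow H N) :=
  match N return carrier (hpow H N) with O => tt | S N => (f O, mkvec H N (fun l => f (S l))) end.

Fixpoint qsum (N : nat) (h : nat -> quat) : quat :=
  match N with O => qzero | S N => qadd (h O) (qsum N (fun l => h (S l))) end.

Lemma ip_mkvec H N : forall f g, ip (hpow H N) (mkvec H N f) (mkvec H N g) = qsum N (fun l => ip H (f l) (g l)).
Proof. induction N; intros; simpl. reflexivity. rewrite <- IHN. reflexivity. Qed.

Lemma qsum_real N : forall q c, qsum N (fun l => qmul q (qreal (c l))) = qmul q (qreal (fsum N c)).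
Proof. induction N; intros. simpl; qsolve. rewrite fsum_shift. simpl qsum. rewrite (IHN q (fun l => c (S l))). qsolve. Qed.

Fixpoint vlin (H : RQHilbert) (v : nat -> carrier H) (c : nat -> R) (N : nat) : carrier H :=
  match N with O => vzero H | S N => vadd H (vlin H v c N) (scale H (v N) (qreal (c N))) end.

Lemma ip_zeror (H : RQHilbert) (z : carrier H) : ip H z (vzero H) = qzero.
Proof. rewrite ip_sym, ip_zerol. qsolve. Qed.

Lemma vlin_l H v c N z : q0 (ip H (vlin H v c N) z) = fsum N (fun a => c a * q0 (ip H (v a) z)).
Proof. induction N; simpl. rewrite ip_zerol; reflexivity.
  rewrite ip_addl, ip_scalel. simpl. rewrite IHN. genip. destruct q. simpl. ring. Qed.

Lemma vlin_r H v c N z : q0 (ip H z (vlin H v c N)) = fsum N (fun a => c a * q0 (ip H z (v a))).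
Proof. induction N; simpl. rewrite ip_zeror; reflexivity.
  rewrite ip_addr, ip_scaler. simpl. rewrite IHN. genip. destruct q. simpl. ring. Qed.

Lemma psd_gramH H (v : nat -> carrier H) M : PSD M (fun a b => q0 (ip H (v a) (v b))).
Proof. split.
  - intros. rewrite (ip_sym H (v a)). destruct (ip H (v a) (v b)); reflexivity.
  - intros c. unfold quad.
    rewrite (fsum_ext M _ (fun a => c a * q0 (ip H (v a) (vlin H v c M)))).
    rewrite <- vlin_l. apply q0_nonneg.
    intros. rewrite vlin_r. rewrite <- fsum_scal. apply fsum_ext; intros; ring.
Qed.

Lemma quad_lin n Z p r a b : (a < n)%nat -> (b < n)%nat ->
  quad n Z (fun i => p * indv a i + r * indv b i) = p * (p * Z a a + r * Z a b) + r * (p * Z b a + r * Z b b).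
Proof. intros Ha Hb. unfold quad.
  set (X := fun i => p * indv a i + r * indv b i).
  rewrite (fsum_ext n _ (fun i => p * (indv a i * (p * Z i a + r * Z i b)) + r * (indv b i * (p * Z i a + r * Z i b)))).
  - rewrite fsum_plus, !fsum_scal. unfold indv. rewrite !fsum_ind by auto. ring.
  - intros i Hi.
    rewrite (fsum_ext n _ (fun j => (X i * p) * (indv a j * Z i j) + (X i * r) * (indv b j * Z i j))).
    + rewrite fsum_plus, !fsum_scal. unfold indv. rewrite !fsum_ind by auto. unfold X, indv. ring.
    + intros. unfold X. ring.
Qed.

Lemma psd_offdiag n Z a b : PSD n Z -> (a < n)%nat -> (b < n)%nat -> 2 * Z a b <= Z a a + Z b b.
Proof. intros [Hs Hp] Ha Hb. specialize (Hp (fun i => 1 * indv a i + (-1) * indv b i)).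
  rewrite quad_lin in Hp by auto. rewrite (Hs b a) in Hp. lra. Qed.

Lemma pow_le1 p k : 0 <= p <= 1 -> 0 <= p ^ k <= 1.
Proof. intros Hp. induction k; simpl; nra. Qed.

Lemma fsum_block N f : fsum (4 * N) f = fsum N (fun a => fsum 4 (fun m => f (4 * a + m)%nat)).
Proof. induction N. reflexivity.
  replace (4 * S N)%nat with (4 * N + 4)%nat by lia. rewrite fsum_add, IHN. simpl fsum at 3. reflexivity. Qed.

Lemma div4 a m : (m < 4)%nat -> ((4 * a + m) / 4 = a)%nat /\ ((4 * a + m) mod 4 = m)%nat.
Proof. intros Hm. split.
  - symmetry. apply (Nat.div_unique _ 4 a m); lia.
  - symmetry. apply (Nat.mod_unique _ 4 a m); lia.
Qed.

Lemma quad_block N Z x : quad (4 * N) Z (fun a => x (a / 4)%nat) =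
  quad N (fun a b => fsum 4 (fun m => fsum 4 (fun m' => Z (4 * a + m)%nat (4 * b + m')%nat))) x.
Proof.
  unfold quad. rewrite fsum_block. apply fsum_ext. intros a Ha.
  rewrite (fsum_ext 4 _ (fun m => fsum N (fun b => fsum 4 (fun m' => x a * x b * Z (4 * a + m)%nat (4 * b + m')%nat)))).
  - rewrite fsum_swap. apply fsum_ext. intros b Hb.
    rewrite <- fsum_scal. apply fsum_ext. intros m Hm. rewrite <- fsum_scal. apply fsum_ext; intros; ring.
  - intros m Hm. rewrite fsum_block. apply fsum_ext. intros b Hb. apply fsum_ext. intros m' Hm'.
    rewrite (proj1 (div4 a m Hm)), (proj1 (div4 b m' Hm')). reflexivity.
Qed.

Definition eps (m : nat) : quat :=
  match m with O => qone | 1%nat => Quat 0 0 1 0 | 2%nat => Quat 0 0 0 1 | _ => Quat 0 1 0 0 end.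

Definition qn2 (q : quat) : R := q0 q ^ 2 + q1 q ^ 2 + q2 q ^ 2 + q3 q ^ 2.

Lemma sixteen q : fsum 4 (fun m => fsum 4 (fun m' =>
   q0 (qmul (qconj (eps m)) (qmul q (eps m'))) * q0 (qmul (qconj (eps m)) (qmul q (eps m'))))) = 4 * qn2 q.
Proof. destruct q. simpl. unfold qn2, qone, qreal. simpl. ring. Qed.

Lemma psd_P H (w : nat -> carrier H) N : PSD N (fun a b => qn2 (ip H (w a) (w b))).
Proof.
  set (v := fun al => scale H (w (al / 4)%nat) (eps (al mod 4)%nat)).
  set (K := fun al be => q0 (ip H (v al) (v be))).
  assert (HK : PSD (4 * N) (fun al be => K al be * K al be)) by (apply schur; apply psd_gramH).
  split.
  - intros. rewrite (ip_sym H (w a)). destruct (ip H (w b) (w a)). unfold qn2; simpl; ring.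
  - intros x. destruct HK as [_ HK]. specialize (HK (fun al => x (al / 4)%nat)).
    rewrite quad_block in HK.
    match type of HK with 0 <= quad N ?B x => set (BL := B) in HK end.
    assert (E : quad N (fun a b => qn2 (ip H (w a) (w b))) x = / 4 * quad N BL x).
    2:{ rewrite E. lra. }
    unfold quad. rewrite <- fsum_scal. apply fsum_ext. intros a Ha.
    rewrite <- fsum_scal. apply fsum_ext. intros b Hb. unfold BL.
    rewrite (fsum_ext 4 _ (fun m => fsum 4 (fun m' =>
       q0 (qmul (qconj (eps m)) (qmul (ip H (w a) (w b)) (eps m'))) * q0 (qmul (qconj (eps m)) (qmul (ip H (w a) (w b)) (eps m')))))).
    + rewrite sixteen. field.
    + intros m Hm. apply fsum_ext. intros m' Hm'. unfold K, v.
      destruct (div4 a m Hm) as [E1 E2]. destruct (div4 b m' Hm') as [E3 E4].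
      rewrite E1, E2, E3, E4. rewrite ip_scalel, ip_scaler. reflexivity.
Qed.

Lemma ip_realscale H (x y : carrier H) al be :
  ip H (scale H x (qreal al)) (scale H y (qreal be)) = qmul (ip H x y) (qreal (al * be)).
Proof. rewrite ip_scalel, ip_scaler. genip. qsolve. Qed.

Lemma qsum_ext N : forall h h', (forall l, h l = h' l) -> qsum N h = qsum N h'.
Proof. induction N; intros h h' E; simpl. auto. rewrite E. f_equal. apply IHN. auto. Qed.

Theorem mainTheorem16 (H : RQHilbert) (n : nat) (x y : nat -> carrier H)
  (hx : forall i, (i < n)%nat -> unit_vec H (x i))
  (hy : forall j, (j < n)%nat -> unit_vec H (y j))
  (a : nat -> R)
  (ha_sum : is_series (fun i => Rabs (a i)) 1) :
  exists (H' : RQHilbert) (u v : nat -> carrier H'),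
    (forall i, (i < n)%nat -> unit_vec H' (u i)) /\
    (forall j, (j < n)%nat -> unit_vec H' (v j)) /\
    (forall i j, (i < n)%nat -> (j < n)%nat ->
       qmul (ip H (x i) (y j)) (qreal (gfun a (qabs (ip H (x i) (y j)))))
       = ip H' (u i) (v j)).
Proof.
  set (N := (n + n)%nat).
  set (w := fun al => if Nat.ltb al n then x al else y (al - n)%nat).
  assert (Hw : forall al, (al < N)%nat -> ip H (w al) (w al) = qone).
  { intros al Hal. unfold w. destruct (Nat.ltb_spec al n).
    - apply unit_ip, hx; auto.
    - apply unit_ip, hy. unfold N in Hal. lia. }
  set (P := fun al be => qn2 (ip H (w al) (w be))).
  assert (HP : PSD N P) by apply psd_P.
  assert (HPd : forall al, (al < N)%nat -> P al al = 1).
  { intros al Hal. unfold P. rewrite Hw by auto. unfold qn2, qone, qreal; simpl. ring. }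
  assert (HPb : forall al be, (al < N)%nat -> (be < N)%nat -> 0 <= P al be <= 1).
  { intros al be H1 H2. split.
    - unfold P, qn2. destruct (ip H (w al) (w be)); simpl. nra.
    - pose proof (psd_offdiag N P al be HP H1 H2). rewrite !HPd in H0 by auto. lra. }
  set (sg := fun k => if Rle_dec 0 (a k) then 1 else -1).
  set (dk := fun k al => if Nat.ltb al n then 1 else sg k).
  set (F := fun k al be => Rabs (a k) * (dk k al * dk k be * P al be ^ k)).
  assert (Hdk : forall k al, Rabs (dk k al) = 1).
  { intros. unfold dk, sg. destruct (Nat.ltb al n); [|destruct (Rle_dec 0 (a k))];
    unfold Rabs; destruct Rcase_abs; lra. }
  assert (HF : forall k, PSD N (F k)).
  { intros k. apply psd_scal. apply Rabs_pos. apply psd_sign. apply psd_pow. auto. }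
  assert (Hex : forall al be, (al < N)%nat -> (be < N)%nat -> ex_series (fun k => F k al be)).
  { intros al be H1 H2. apply (@ex_series_le R_AbsRing R_CompleteNormedModule _ (fun k => Rabs (a k))).
    - intros k. change norm with Rabs. unfold F. 
      rewrite !Rabs_mult, !Hdk. pose proof (pow_le1 _ k (HPb al be H1 H2)).
      rewrite (Rabs_pos_eq (P al be ^ k)) by lra. rewrite Rabs_Rabsolu. pose proof (Rabs_pos (a k)). nra.
    - exists 1. auto. }
  set (Zm := fun al be => Series (fun k => F k al be)).
  assert (HZ : PSD N Zm) by (apply psd_series; auto).
  destruct (chol N Zm HZ) as [L HL].
  assert (HZd : forall al, (al < N)%nat -> Zm al al = 1).
  { intros al Hal. unfold Zm. apply is_series_unique. eapply is_series_ext; [|exact ha_sum].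
    intros k. unfold F. rewrite HPd by auto. rewrite pow1.
    assert (dk k al * dk k al = 1).
    { pose proof (Hdk k al). destruct (Rle_dec 0 (dk k al)).
      rewrite Rabs_pos_eq in H0 by auto. rewrite H0; ring. rewrite Rabs_left in H0 by lra. nra. }
    rewrite H0, Rmult_1_l, Rmult_1_r. reflexivity. }
  assert (HZo : forall i j, (i < n)%nat -> (j < n)%nat ->
     Zm i (n + j)%nat = gfun a (qabs (ip H (x i) (y j)))).
  { intros i j Hi Hj. unfold Zm, gfun. apply Series_ext. intros k. unfold F, dk, P, w.
    destruct (Nat.ltb_spec i n); [|lia]. destruct (Nat.ltb_spec (n + j) n); [lia|].
    replace (n + j - n)%nat with j by lia.
    unfold qabs. rewrite pow_mult. rewrite pow2_sqrt.
    2:{ destruct (ip H (x i) (y j)); simpl. nra. }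
    fold (qn2 (ip H (x i) (y j))).
    unfold sg. destruct (Rle_dec 0 (a k)).
    - rewrite Rabs_pos_eq by auto. ring.
    - rewrite Rabs_left by lra. ring. }
  exists (hpow H N).
  exists (fun i => mkvec H N (fun l => scale H (x i) (qreal (L i l)))).
  exists (fun j => mkvec H N (fun l => scale H (y j) (qreal (L (n + j)%nat l)))).
  split; [|split].
  - intros i Hi. unfold unit_vec, vnorm. rewrite ip_mkvec.
    rewrite (qsum_ext _ _ _ (fun l => ip_realscale H _ _ _ _)).
    rewrite qsum_real. rewrite <- HL by (unfold N; lia). rewrite HZd by (unfold N; lia).
    rewrite unit_ip by auto. simpl. replace (1 * 1 - 0 * 0 - 0 * 0 - 0 * 0) with 1 by ring. apply sqrt_1.
  - intros j Hj. unfold unit_vec, vnorm. rewrite ip_mkvec.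
    rewrite (qsum_ext _ _ _ (fun l => ip_realscale H _ _ _ _)).
    rewrite qsum_real. rewrite <- HL by (unfold N; lia). rewrite HZd by (unfold N; lia).
    rewrite unit_ip by auto. simpl. replace (1 * 1 - 0 * 0 - 0 * 0 - 0 * 0) with 1 by ring. apply sqrt_1.
  - intros i j Hi Hj. rewrite ip_mkvec.
    rewrite (qsum_ext _ _ _ (fun l => ip_realscale H _ _ _ _)).
    rewrite qsum_real. rewrite <- HL by (unfold N; lia). rewrite HZo by auto. reflexivity.
Qed.
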